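(* Let $p\in\mathbb{R}[x_1,\dots,x_n]$. Then $\|p\|_{1,\mathrm{cheb}}-p\in\mathcal Q(1-x_1^2,\dots,1-x_n^2)_{2\deg(p)}$.
   Context: $\Sigma[x]_r$ is the cone of sums of squares of polynomials in $x=(x_1,\dots,x_n)$ of total degree at most $r$; $\mathcal Q(1-x_1^2,\dots,1-x_n^2)_r=\Sigma[x]_r+\sum_{i=1}^n(1-x_i^2)\Sigma[x]_{r-2}$. $T_k(x)=\cos(k\arccos x)$; for $\alpha\in\mathbb{N}_0^n$, $T_\alpha(x)=\prod_iT_{\alpha_i}(x_i)$; for $p=\sum_\alpha p_\alpha T_\alpha$, $\|p\|_{1,\mathrm{cheb}}=\sum_\alpha|p_\alpha|$. *)

(* Defs.v *)
From HB Require Import structures.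
From mathcomp Require Import all_boot all_order all_algebra.
From mathcomp Require Import reals.
From mathcomp Require Import mpoly.
From Stdlib Require Import ClassicalEpsilon.
Set Implicit Arguments. Unset Strict Implicit. Unset Printing Implicit Defensive.
Import Order.TTheory GRing.Theory Num.Theory.
Local Open Scope ring_scope.

Section Defs.
Variables (R : realType) (n : nat).

(* Univariate Chebyshev polynomials of the first kind: T_0 = 1, T_1 = X,
   T_{k+2} = 2 X T_{k+1} - T_k  (the polynomials with T_k(cos t) = cos(k t)). *)
Fixpoint cheb_pair (k : nat) : {poly R} * {poly R} :=
  match k with
  | 0%N => (1, 'X)
  | k'.+1 => let: (a, b) := cheb_pair k' in (b, 2%:R *: 'X * b - a)
  end.
Definition chebT (k : nat) : {poly R} := (cheb_pair k).1.

Definition chebT_var (k : nat) (i : 'I_n) : {mpoly R[n]} :=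
  \sum_(j < size (chebT k)) (chebT k)`_j *: 'X_i ^+ j.

Definition chebT_multi (a : 'X_{1..n}) : {mpoly R[n]} :=
  \prod_(i < n) chebT_var (a i) i.

(* The polynomial sum_alpha c_alpha T_alpha, where the finitely supported
   coefficient family (c_alpha) is stored as the coefficients of an mpoly c. *)
Definition cheb_eval (c : {mpoly R[n]}) : {mpoly R[n]} :=
  \sum_(a <- msupp c) c@_a *: chebT_multi a.

(* The Chebyshev coefficients of p: the (unique) family c with p = sum c_a T_a. *)
Definition cheb_coefs (p : {mpoly R[n]}) : {mpoly R[n]} :=
  epsilon (inhabits 0) (fun c => cheb_eval c = p).

Definition cheb_norm1 (p : {mpoly R[n]}) : R :=
  \sum_(a <- msupp (cheb_coefs p)) `|(cheb_coefs p)@_a|.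

(* total degree; deg 0 := 0 *)
Definition mdegree (p : {mpoly R[n]}) : nat := (msize p).-1.

Definition is_sos (s : {mpoly R[n]}) : Prop :=
  exists qs : seq {mpoly R[n]}, s = \sum_(q <- qs) q ^+ 2.

(* Sigma[x]_r : sums of squares of total degree at most r, encoded via
   msize s <= r.+1 (msize = 1 + degree, msize 0 = 0). *)
Definition sos_le (r : nat) (s : {mpoly R[n]}) : Prop :=
  is_sos s /\ (msize s <= r.+1)%N.

(* Q(1-x_1^2,...,1-x_n^2)_r = Sigma_r + sum_i (1 - x_i^2) Sigma_{r-2};
   Sigma_{r-2} is encoded by msize <= r - 1 (truncated), so that for r < 2
   it is {0}, as Sigma of negative degree must be. *)
Definition trunc_qmodule (r : nat) (p : {mpoly R[n]}) : Prop :=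
  exists (s0 : {mpoly R[n]}) (s : 'I_n -> {mpoly R[n]}),
    sos_le r s0 /\
    (forall i, is_sos (s i) /\ (msize (s i) <= r.-1)%N) /\
    p = s0 + \sum_(i < n) (1 - 'X_i ^+ 2) * s i.

End Defs.

(* Main.v *)
Require Import Defs.
From mathcomp Require Import all_boot all_order all_algebra.
From mathcomp Require Import reals.
From mathcomp Require Import mpoly.
From mathcomp Require Import ring zify.
From Stdlib Require Import ClassicalEpsilon.
Import Order.TTheory GRing.Theory Num.Theory.
Local Open Scope ring_scope.
Set Implicit Arguments. Unset Strict Implicit. Unset Printing Implicit Defensive.

Section Uni.
Variable R : realType.
Local Notation T := (chebT R).

Lemma cheb_pairE k : cheb_pair R k = (T k, T k.+1).
Proof.
elim: k => [//|k IH] /=. rewrite IH /chebT /=.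
by case: (cheb_pair R k) IH => a b [-> ->].
Qed.

Lemma chebT0 : T 0 = 1. Proof. by []. Qed.
Lemma chebT1 : T 1 = 'X. Proof. by []. Qed.
Lemma chebTSS k : T k.+2 = 2%:R *: 'X * T k.+1 - T k.
Proof. by rewrite /chebT /= cheb_pairE. Qed.

Fixpoint chebS (k : nat) : {poly R} :=
  if k is k'.+1 then 'X * chebS k' + T k' else 0.

Lemma chebT_S k : T k.+1 = 'X * T k - (1 - 'X ^+ 2) * chebS k.
Proof.
elim: k => [|k IH]; first by rewrite chebT1 chebT0 /= mulr0 subr0 mulr1.
rewrite chebTSS /= -mul_polyC polyC_natr IH. ring.
Qed.

Lemma pell k : T k ^+ 2 + (1 - 'X ^+ 2) * chebS k ^+ 2 = 1.
Proof.
elim: k => [|k IH]; first by rewrite chebT0 /= expr0n /= mulr0 addr0 expr1n.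
rewrite chebT_S /=. rewrite -[RHS]IH. ring.
Qed.

Definition Qc k := (forall j, (k < j)%N -> (T k)`_j = 0) /\ 0 < (T k)`_k.

Lemma Qc_all k : Qc k /\ Qc k.+1.
Proof.
elim: k => [|k [[IH1 IH2] [IH3 IH4]]].
  split; split.
  - by move=> [|j] //= _; rewrite chebT0 coefC.
  - by rewrite chebT0 coefC /= ltr01.
  - by move=> [|[|j]] //= _; rewrite chebT1 coefX.
  - by rewrite chebT1 coefX /= ltr01.
split; first by split.
split.
  move=> j hj; rewrite chebTSS -scalerAl coefB coefZ coefXM.
  case: j hj => [//|j] hj /=.
  by rewrite IH3 ?IH1 ?mulr0 ?subr0 //; lia.
rewrite chebTSS -scalerAl coefB coefZ coefXM /= IH1 // subr0.
by rewrite mulr_gt0 // ltr0n.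
Qed.

Lemma size_chebT k : (size (T k) <= k.+1)%N.
Proof.
apply/leq_sizeP => j hj; apply: (Qc_all k).1.1; lia.
Qed.

Lemma chebT_lead k : (T k)`_k != 0.
Proof. by have [[_ /lt0r_neq0]] := Qc_all k. Qed.

Lemma size_chebS k : (size (chebS k) <= k)%N.
Proof.
elim: k => [|k IH] /=; first by rewrite size_poly0.
apply: (leq_trans (size_polyD _ _)); rewrite geq_max size_chebT andbT.
have [->|nz] := eqVneq (chebS k) 0; first by rewrite mulr0 size_poly0.
by rewrite mulrC size_mulX.
Qed.

End Uni.

Section Multi.
Variables (R : realType) (n : nat).
Local Notation MP := {mpoly R[n]}.

Definition phi (i : 'I_n) : {poly R} -> MP := horner_alg ('X_i : MP).

Lemma phiE i q : phi i q = \sum_(j < size q) q`_j *: 'X_i ^+ j.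
Proof.
rewrite /phi /horner_alg /horner_morph.
have hs : (size (map_poly (in_alg MP) q) <= size q)%N.
  by apply/leq_sizeP => j hj; rewrite coef_map /= nth_default // scale0r.
rewrite (horner_coef_wide _ hs).
apply: eq_bigr => j _; by rewrite coef_map /= mulr_algl.
Qed.

Lemma chebT_varE k i : chebT_var R k i = phi i (chebT R k).
Proof. by rewrite phiE. Qed.


Lemma phiM i : {morph phi i : x y / x * y}. Proof. exact: rmorphM. Qed.
Lemma phiB i : {morph phi i : x y / x - y}. Proof. exact: rmorphB. Qed.
Lemma phiD i : {morph phi i : x y / x + y}. Proof. exact: rmorphD. Qed.
Lemma phiXX i q k : phi i (q ^+ k) = phi i q ^+ k. Proof. by rewrite /phi rmorphXn. Qed.
Lemma phi1 i : phi i 1 = 1. Proof. exact: rmorph1. Qed.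
Lemma phiX i : phi i 'X = 'X_i. Proof. exact: horner_algX. Qed.
Lemma phiXn i k : phi i ('X ^+ k) = 'X_i ^+ k. Proof. by rewrite /phi rmorphXn /= horner_algX. Qed.
Lemma phiZ i c q : phi i (c *: q) = c *: phi i q. Proof. by rewrite /phi -mul_polyC rmorphM /= horner_algC mulr_algl. Qed.

Lemma msizeM_le' (p q : MP) : (msize (p * q) <= (msize p + msize q).-1)%N.
Proof.
have [->|nzp] := eqVneq p 0; first by rewrite mul0r msize0.
have [->|nzq] := eqVneq q 0; first by rewrite mulr0 msize0.
by rewrite msizeM.
Qed.

Lemma msizeM_bnd (p q : MP) d1 d2 : (msize p <= d1.+1)%N -> (msize q <= d2.+1)%N ->
  (msize (p * q) <= (d1 + d2).+1)%N.
Proof. move=> h1 h2; apply: (leq_trans (msizeM_le' _ _)); lia. Qed.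

Lemma msizeM_bnd' (p q : MP) d1 d2 : (msize p <= d1.+1)%N -> (msize q <= d2)%N ->
  (msize (p * q) <= d1 + d2)%N.
Proof. move=> h1 h2; apply: (leq_trans (msizeM_le' _ _)); lia. Qed.

Lemma msizeD_bnd (p q : MP) d : (msize p <= d)%N -> (msize q <= d)%N ->
  (msize (p + q) <= d)%N.
Proof. move=> h1 h2; apply: (leq_trans (msizeD_le _ _)); by rewrite geq_max h1 h2. Qed.

Lemma msizeB_bnd (p q : MP) d : (msize p <= d)%N -> (msize q <= d)%N ->
  (msize (p - q) <= d)%N.
Proof. by move=> h1 h2; apply: msizeD_bnd; rewrite ?msizeN. Qed.

Lemma msizeZ_bnd (p : MP) c d : (msize p <= d)%N -> (msize (c *: p) <= d)%N.
Proof. by move=> h; apply: leq_trans (msizeZ_le _ _) h. Qed.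

Lemma msize_sum_bnd (I : Type) (r : seq I) (F : I -> MP) d :
  (forall i, (msize (F i) <= d)%N) -> (msize (\sum_(i <- r) F i) <= d)%N.
Proof.
move=> h; elim: r => [|x r IH]; first by rewrite big_nil msize0.
by rewrite big_cons; apply: msizeD_bnd.
Qed.

Lemma msize_sum_bnd_seq (I : eqType) (r : seq I) (F : I -> MP) d :
  (forall i, i \in r -> (msize (F i) <= d)%N) -> (msize (\sum_(i <- r) F i) <= d)%N.
Proof.
elim: r => [|x r IH] h; first by rewrite big_nil msize0.
rewrite big_cons; apply: msizeD_bnd; first by apply: h; rewrite inE eqxx.
by apply: IH => i hi; apply: h; rewrite inE hi orbT.
Qed.

Lemma msizeXin (i : 'I_n) k : (msize ('X_i ^+ k : MP) <= k.+1)%N.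
Proof.
by rewrite mpolyXn msizeX mdegMn mdeg1 mul1n.
Qed.

Lemma msize_phi i q : (msize (phi i q) <= size q)%N.
Proof.
rewrite phiE; apply: msize_sum_bnd => j; apply: msizeZ_bnd.
by apply: leq_trans (msizeXin _ _) _.
Qed.


Definition ext (G : 'I_n -> MP) (j : nat) : MP := if insub j is Some i then G i else 1.
Definition extn (a : 'X_{1..n}) (j : nat) : nat := if insub j is Some i then a i else 0%N.

Lemma extE G (i : 'I_n) : ext G i = G i.
Proof. by rewrite /ext valK. Qed.

Lemma prod_ext G : \prod_(i < n) G i = \prod_(j < n) ext G j.
Proof. by apply: eq_bigr => i _; rewrite extE. Qed.

Lemma mdeg_ext a : mdeg a = (\sum_(j < n) extn a j)%N.
Proof. by rewrite mdegE; apply: eq_bigr => i _; rewrite /extn valK. Qed.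

Lemma telescope (F : nat -> MP) m :
  1 - (\prod_(j < m) F j) ^+ 2 = \sum_(i < m) (\prod_(j < i) F j) ^+ 2 * (1 - F i ^+ 2).
Proof.
elim: m => [|m IH]; first by rewrite !big_ord0 expr1n subrr.
rewrite big_ord_recr [in RHS]big_ord_recr /= -IH; ring.
Qed.

Lemma prod_bnd (F : nat -> MP) (d : nat -> nat) m :
  (forall j, (msize (F j) <= (d j).+1)%N) ->
  (msize (\prod_(j < m) F j) <= (\sum_(j < m) d j).+1)%N.
Proof.
move=> h; elim: m => [|m IH]; first by rewrite !big_ord0 msize1.
by rewrite !big_ord_recr /=; apply: msizeM_bnd.
Qed.

Lemma lead_prod (A B : nat -> MP) (d : nat -> nat) m :
  (forall j, (msize (B j) <= (d j).+1)%N) ->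
  (forall j, (msize (A j - B j) <= d j)%N) ->
  (msize (\prod_(j < m) A j - \prod_(j < m) B j) <= \sum_(j < m) d j)%N.
Proof.
move=> hB hAB; elim: m => [|m IH]; first by rewrite !big_ord0 subrr msize0.
rewrite !big_ord_recr /=.
set P := \prod_(j < m) A j; set Q := \prod_(j < m) B j.
have -> : P * A m - Q * B m = (P - Q) * A m + Q * (A m - B m) by ring.
have hA : (msize (A m) <= (d m).+1)%N.
  have -> : A m = (A m - B m) + B m by ring.
  apply: msizeD_bnd => //; exact: leq_trans (hAB m) _.
apply: msizeD_bnd.
  rewrite mulrC; have := msizeM_bnd' hA IH; by rewrite addnC.
exact: msizeM_bnd' (prod_bnd _ hB) (hAB m).
Qed.

Lemma nat_sum_mono (f : nat -> nat) m m' : (m <= m')%N ->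
  (\sum_(j < m) f j <= \sum_(j < m') f j)%N.
Proof.
move=> h; rewrite -(subnKC h); elim: (m' - m)%N => [|k IH]; first by rewrite addn0.
by rewrite addnS big_ord_recr /=; apply: leq_trans IH (leq_addr _ _).
Qed.

Definition tt (a : 'X_{1..n}) (i : 'I_n) : MP := phi i (chebT R (a i)).
Definition uu (a : 'X_{1..n}) (i : 'I_n) : MP := phi i (chebS R (a i)).
Definition lam (a : 'X_{1..n}) : R := \prod_(i < n) (chebT R (a i))`_(a i).

Lemma chebT_multiE a : chebT_multi R a = \prod_(j < n) ext (tt a) j.
Proof. by rewrite -prod_ext; apply: eq_bigr => i _; rewrite chebT_varE. Qed.

Lemma pell_multi a i : 1 - tt a i ^+ 2 = (1 - 'X_i ^+ 2) * uu a i ^+ 2.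
Proof.
have := congr1 (phi i) (pell R (a i)).
rewrite /tt /uu phi1 phiD !phiXX phiM phiB phi1 phiXn.
rewrite phiXX => h; rewrite -{1}h; ring.
Qed.

Lemma msize_tt a i : (msize (tt a i) <= (a i).+1)%N.
Proof. exact: leq_trans (msize_phi _ _) (size_chebT _ _). Qed.

Lemma msize_uu a i : (msize (uu a i) <= a i)%N.
Proof. exact: leq_trans (msize_phi _ _) (size_chebS _ _). Qed.

Lemma lam_neq0 a : lam a != 0.
Proof. by apply/prodf_neq0 => i _; apply: chebT_lead. Qed.

Lemma chebT_lead_decomp a :
  (msize (chebT_multi R a - lam a *: 'X_[a]) <= mdeg a)%N.
Proof.
rewrite chebT_multiE mpolyXE_id /lam -scaler_prod.
rewrite (prod_ext (fun i => _ *: _)) mdeg_ext.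
apply: lead_prod => j; rewrite /ext /extn; case: (insub j) => [i|]; last first.
- by rewrite subrr msize0.
- rewrite /tt -phiXn -phiZ -phiB; apply: leq_trans (msize_phi _ _) _.
  apply/leq_sizeP => k hk; rewrite coefB coefZ coefXn.
  have [->|ne] := eqVneq k (a i); first by rewrite mulr1 subrr.
  rewrite mulr0 subr0; apply: (Qc_all R (a i)).1.1; lia.
- by rewrite msize1.
- exact: msizeZ_bnd (msizeXin _ _).
Qed.


Local Notation TM := (chebT_multi R).

Lemma mcoeff_sumS (I : Type) (r : seq I) (F : I -> MP) m :
  (\sum_(i <- r) F i)@_m = \sum_(i <- r) (F i)@_m.
Proof.
elim: r => [|x r IH]; first by rewrite !big_nil mcoeff0.
by rewrite !big_cons mcoeffD IH.
Qed.

Lemma cheb_eval_wide (c : MP) (s : seq 'X_{1..n}) : uniq s -> {subset msupp c <= s} ->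
  cheb_eval c = \sum_(a <- s) c@_a *: TM a.
Proof.
move=> us sub.
rewrite [RHS](bigID (fun a => a \in msupp c)) /= [X in _ + X]big1 ?addr0; last first.
  by move=> a /memN_msupp_eq0 ->; rewrite scale0r.
rewrite -big_filter /cheb_eval; apply: perm_big.
apply: uniq_perm; first exact: msupp_uniq.
  exact: filter_uniq.
move=> x; rewrite mem_filter; case h: (x \in msupp c) => //=.
by rewrite (sub _ h).
Qed.

Lemma cheb_eval0 : cheb_eval (0 : MP) = 0.
Proof. by rewrite /cheb_eval big1 // => a _; rewrite mcoeff0 scale0r. Qed.

Lemma cheb_evalD (c1 c2 : MP) : cheb_eval (c1 + c2) = cheb_eval c1 + cheb_eval c2.
Proof.
set s := undup (msupp c1 ++ msupp c2).
have us : uniq s by apply: undup_uniq.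
rewrite (@cheb_eval_wide c1 s) //; last by move=> x hx; rewrite mem_undup mem_cat hx.
rewrite (@cheb_eval_wide c2 s) //; last by move=> x hx; rewrite mem_undup mem_cat hx orbT.
rewrite (@cheb_eval_wide _ s) //; last first.
  by move=> x /msuppD_le; rewrite mem_undup.
by rewrite -big_split /=; apply: eq_bigr => a _; rewrite mcoeffD scalerDl.
Qed.

Lemma cheb_evalZ k (c : MP) : cheb_eval (k *: c) = k *: cheb_eval c.
Proof.
rewrite (@cheb_eval_wide _ (msupp c)) ?msupp_uniq //; last exact: msuppZ_le.
by rewrite /cheb_eval scaler_sumr; apply: eq_bigr => a _; rewrite mcoeffZ scalerA.
Qed.

Lemma cheb_evalX m : cheb_eval ('X_[m] : MP) = TM m.
Proof. by rewrite /cheb_eval msuppX big_seq1 mcoeffX eqxx scale1r. Qed.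

Definition span (q : MP) := exists c, cheb_eval c = q.

Lemma span0 : span 0. Proof. by exists 0; exact: cheb_eval0. Qed.
Lemma spanD q1 q2 : span q1 -> span q2 -> span (q1 + q2).
Proof. by move=> [c1 <-] [c2 <-]; exists (c1 + c2); rewrite cheb_evalD. Qed.
Lemma spanZ k q : span q -> span (k *: q).
Proof. by move=> [c <-]; exists (k *: c); rewrite cheb_evalZ. Qed.
Lemma spanB q1 q2 : span q1 -> span q2 -> span (q1 - q2).
Proof. by move=> h1 h2; rewrite -scaleN1r; apply: spanD h1 (spanZ _ h2). Qed.
Lemma spanT m : span (TM m). Proof. by exists 'X_[m]; rewrite cheb_evalX. Qed.
Lemma span_sum (I : Type) (r : seq I) (F : I -> MP) :
  (forall i, span (F i)) -> span (\sum_(i <- r) F i).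
Proof.
move=> h; elim: r => [|x r IH]; first by rewrite big_nil; exact: span0.
by rewrite big_cons; apply: spanD.
Qed.

Lemma span_sum_seq (I : eqType) (r : seq I) (F : I -> MP) :
  (forall i, i \in r -> span (F i)) -> span (\sum_(i <- r) F i).
Proof.
elim: r => [|x r IH] h; first by rewrite big_nil; exact: span0.
rewrite big_cons; apply: spanD; first by apply: h; rewrite inE eqxx.
by apply: IH => i hi; apply: h; rewrite inE hi orbT.
Qed.

Lemma span_all k (q : MP) : (msize q <= k)%N -> span q.
Proof.
elim: k q => [|k IH] q hq.
  move: hq; rewrite leqn0 msize_poly_eq0 => /eqP ->; exact: span0.
rewrite (mpolyE q); apply: span_sum_seq => m hm.
apply: spanZ.
have hd : (mdeg m <= k)%N by have := msize_mdeg_lt hm; lia.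
have -> : ('X_[m] : MP) = (lam m)^-1 *: (TM m - (TM m - lam m *: 'X_[m])).
  by rewrite opprB addrC subrK scalerA mulVf ?lam_neq0 // scale1r.
apply: spanZ; apply: spanB; first exact: spanT.
apply: IH; exact: leq_trans (chebT_lead_decomp m) hd.
Qed.

Lemma exists_max_seq (T : eqType) (s : seq T) (f : T -> nat) (x0 : T) : x0 \in s ->
  exists2 b, b \in s & (\max_(x <- s) f x = f b)%N.
Proof.
elim: s x0 => [//|x s IH] x0 _.
rewrite big_cons.
case: s IH => [|y s] IH.
  by exists x; rewrite ?inE ?eqxx // big_nil maxn0.
have [b hb ->] := IH y (mem_head _ _).
case: (leqP (f x) (f b)) => h.
  by exists b; [rewrite inE hb orbT | lia].
by exists x; [rewrite inE eqxx | lia].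
Qed.

Lemma supp_deg (c : MP) a : a \in msupp c -> (mdeg a < msize (cheb_eval c))%N.
Proof.
move=> ha.
have [b hb hmax] := exists_max_seq mdeg ha.
have hle : forall a', a' \in msupp c -> (mdeg a' <= mdeg b)%N.
  by move=> a' h'; rewrite -hmax; exact: (@leq_bigmax_seq _ _ xpredT mdeg a' h' isT).
apply: (leq_ltn_trans (hle a ha)); apply: msize_mdeg_lt.
rewrite mcoeff_msupp.
have -> : (cheb_eval c)@_b = c@_b * lam b.
  rewrite /cheb_eval mcoeff_sumS (bigD1_seq b) ?msupp_uniq //= big1_seq; last first.
    move=> a' /andP [ne h'].
    have -> : TM a' = lam a' *: 'X_[a'] + (TM a' - lam a' *: 'X_[a']) by rewrite addrC subrK.
    rewrite mcoeffZ mcoeffD mcoeffZ mcoeffX (negbTE ne) mulr0 add0r.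
    rewrite (@memN_msupp_eq0 _ _ (TM a' - _)) ?mulr0 //; apply: msize_mdeg_ge.
    exact: leq_trans (chebT_lead_decomp a') (hle a' h').
  rewrite addr0.
  have -> : TM b = lam b *: 'X_[b] + (TM b - lam b *: 'X_[b]) by rewrite addrC subrK.
  rewrite mcoeffZ mcoeffD mcoeffZ mcoeffX eqxx mulr1.
  rewrite (@memN_msupp_eq0 _ _ (TM b - _)) ?addr0 //; apply: msize_mdeg_ge.
  exact: chebT_lead_decomp.
by apply: mulf_neq0; [rewrite -mcoeff_msupp | apply: lam_neq0].
Qed.


Lemma is_sos_sum (I : Type) (r : seq I) (F : I -> MP) :
  is_sos (\sum_(i <- r) F i ^+ 2).
Proof. by exists (map F r); rewrite big_map. Qed.

Lemma mpolyC_sum (I : Type) (r : seq I) (F : I -> R) :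
  (\sum_(i <- r) F i)%:MP = \sum_(i <- r) (F i)%:MP :> MP.
Proof.
elim: r => [|x r IH]; first by rewrite !big_nil mpolyC0.
by rewrite !big_cons mpolyCD IH.
Qed.

Definition Pp (a : 'X_{1..n}) (i : nat) : MP := \prod_(j < i) ext (tt a) j.

Lemma msize_TM (a : 'X_{1..n}) : (msize (TM a) <= (mdeg a).+1)%N.
Proof.
rewrite chebT_multiE mdeg_ext; apply: prod_bnd => j.
rewrite /ext /extn; case: (insub j) => [i|]; first exact: msize_tt.
by rewrite msize1.
Qed.

Lemma msize_Ppu (a : 'X_{1..n}) (i : 'I_n) : (msize (Pp a i * uu a i) <= mdeg a)%N.
Proof.
have h1 : (msize (Pp a i) <= (\sum_(j < i) extn a j).+1)%N.
  apply: prod_bnd => j; rewrite /ext /extn; case: (insub j) => [k|]; first exact: msize_tt.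
  by rewrite msize1.
have h2 : (msize (uu a i) <= extn a i)%N by rewrite /extn valK; exact: msize_uu.
apply: leq_trans (msizeM_bnd' h1 h2) _.
have -> : (\sum_(j < i) extn a j + extn a i = \sum_(j < i.+1) extn a j)%N.
  by rewrite big_ord_recr.
rewrite mdeg_ext; exact: nat_sum_mono.
Qed.

Lemma sq_bnd (q : MP) d : (msize q <= d)%N -> (msize (q ^+ 2) <= (d + d).-1)%N.
Proof. move=> h; rewrite expr2; apply: leq_trans (msizeM_le' _ _) _; lia. Qed.

Lemma mpolyCX2 (x : R) : (x ^+ 2)%:MP = (x%:MP ^+ 2 : MP).
Proof. by rewrite !expr2 mpolyCM. Qed.

Lemma per_a (c : R) (a : 'X_{1..n}) : c != 0 ->
  (`|c|)%:MP - c *: TM a =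
  (Num.sqrt (`|c| / 2) *: (1 - Num.sg c *: TM a)) ^+ 2 +
  \sum_(i < n) (1 - 'X_i ^+ 2) * (Num.sqrt (`|c| / 2) *: (Pp a i * uu a i)) ^+ 2.
Proof.
move=> c0.
set r := Num.sqrt (`|c| / 2).
have hr : r ^+ 2 = `|c| / 2 by rewrite sqr_sqrtr // divr_ge0.
have -> : \sum_(i < n) (1 - 'X_i ^+ 2) * (r *: (Pp a i * uu a i)) ^+ 2
    = (r ^+ 2) *: (1 - TM a ^+ 2).
  rewrite chebT_multiE telescope scaler_sumr; apply: eq_bigr => i _.
  rewrite extE pell_multi /Pp -!mul_mpolyC mpolyCX2; ring.
rewrite hr -!mul_mpolyC.
set T := TM a.
have hG : (Num.sg c)%:MP * (Num.sg c)%:MP = 1 :> MP.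
  by rewrite -mpolyCM -expr2 sqr_sg c0 mpolyC1.
have hC : c%:MP = (Num.sg c)%:MP * (`|c|)%:MP :> MP by rewrite -mpolyCM mulr_sg_norm.
have hE : (`|c|)%:MP = (`|c| / 2)%:MP + (`|c| / 2)%:MP :> MP.
  by rewrite -mpolyCD -splitr.
rewrite hC hE exprMn -mpolyCX2 hr.
set G := (Num.sg c)%:MP; set H := (`|c| / 2)%:MP.
have -> : (H + H) - G * (H + H) * T = H * (1 - G * T) ^+ 2 + H * (1 - T ^+ 2)
  + H * T ^+ 2 * (1 - G * G) by ring.
by rewrite hG subrr mulr0 addr0.
Qed.

End Multi.


Theorem corollary3 (R : realType) (n : nat) (p : {mpoly R[n]}) :
  trunc_qmodule (2 * mdegree p)%N ((cheb_norm1 p)%:MP - p).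
Proof.
have hspec : cheb_eval (cheb_coefs p) = p.
  apply: (epsilon_spec (inhabits 0) (fun c => cheb_eval c = p)).
  exact: (span_all (leqnn (msize p))).
rewrite /cheb_norm1.
set c := cheb_coefs p in hspec *.
set d := mdegree p.
have hdeg : forall a, a \in msupp c -> (mdeg a <= d)%N.
  move=> a ha; have := supp_deg ha; rewrite hspec /d /mdegree; lia.
set r := fun a => Num.sqrt (`|c@_a| / 2).
exists (\sum_(a <- msupp c) (r a *: (1 - Num.sg c@_a *: chebT_multi R a)) ^+ 2).
exists (fun i : 'I_n => \sum_(a <- msupp c) (r a *: (Pp R a i * uu R a i)) ^+ 2).
split; [split; first exact: is_sos_sum|split].
- apply: msize_sum_bnd_seq => a ha.
  apply: leq_trans (sq_bnd (d := d.+1) _) _; last lia.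
  apply: msizeZ_bnd; apply: msizeB_bnd; first by rewrite msize1.
  apply: msizeZ_bnd; apply: leq_trans (msize_TM _ _) _; have := hdeg a ha; lia.
- move=> i; split; first exact: is_sos_sum.
  apply: msize_sum_bnd_seq => a ha.
  apply: leq_trans (sq_bnd (d := d) _) _; last lia.
  apply: msizeZ_bnd; apply: leq_trans (msize_Ppu _ _ _) (hdeg a ha).
- rewrite -[in LHS]hspec /cheb_eval mpolyC_sum -sumrB.
  under [X in _ = _ + X]eq_bigr do rewrite mulr_sumr.
  rewrite exchange_big /= -big_split /=.
  rewrite !big_seq; apply: eq_bigr => a ha.
  by apply: per_a; rewrite -mcoeff_msupp.
Qed.
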